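(* Let $N\ge 1$ and let $b$ be an atomic program term. For each $m\in\{1,\ldots,N\}$ let $\mathfrak{M}_m$ and $A_m$ be as defined in the context. Then for all $k,m\in\{1,\ldots,N\}$ and every state $x$ of $\mathfrak{M}_k$: $\mathfrak{M}_k,x\models A_m$ if, and only if, $k=m$ and $x=r_m$.
   Context: IPDL formulas are built from propositional variables, $\bot$, $\rightarrow$ and box modalities $[\alpha]$ indexed by program terms built from atomic program terms; $\top=\neg\bot$ and $\langle\alpha\rangle\psi=\neg[\alpha]\neg\psi$. A Kripke model is $(S,\{R_a\}_{a\in AP},V)$ with $S$ a nonempty set, binary relations $R_a$ on $S$ for each atomic program $a$, and valuation $V$; $\mathfrak{M},s\models[a]\psi$ iff $\psi$ holds at every $t$ with $(s,t)\in R_a$, and Boolean connectives are classical. For $m\ge 1$, $\mathfrak{M}_m=(S_m,\{R_a\}_{a\in AP},V_m)$ where $S_m=\{r_m,t^m,s^m_1,\ldots,s^m_m\}$ (distinct states), $R_b$ is the transitive closure of $\{(r_m,t^m),(t^m,t^m),(r_m,s^m_1)\}\cup\{(s^m_i,s^m_{i+1}):1\le i\le m-1\}$, $R_a=\varnothing$ for $a\neq b$, and $V_m(p)=\varnothing$ for every variable $p$. Define $\langle b\rangle^0\psi=\psi$, $\langle b\rangle^{j+1}\psi=\langle b\rangle\langle b\rangle^j\psi$, and $$A_m=\langle b\rangle^m[b]\bot\wedge\neg\langle b\rangle^{m+1}[b]\bot\wedge\langle b\rangle(\langle b\rangle\top\wedge[b]\langle b\rangle\top).$$ *)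

(* Defs.v *)
From mathcomp Require Import all_boot.
From Stdlib Require Import Relations.

Set Implicit Arguments.
Unset Strict Implicit.

Inductive prog (AP : Type) : Type :=
  | PAtom : AP -> prog AP
  | PSeq : prog AP -> prog AP -> prog AP
  | PUnion : prog AP -> prog AP -> prog AP
  | PInter : prog AP -> prog AP -> prog AP
  | PStar : prog AP -> prog AP.

Inductive form (AP PV : Type) : Type :=
  | FVar : PV -> form AP PV
  | FBot : form AP PV
  | FImp : form AP PV -> form AP PV -> form AP PV
  | FBox : prog AP -> form AP PV -> form AP PV.

Arguments FBot {AP PV}.

Definition FNeg {AP PV} (f : form AP PV) : form AP PV := FImp f FBot.
Definition FTop {AP PV} : form AP PV := FNeg FBot.
Definition FAnd {AP PV} (f g : form AP PV) : form AP PV := FNeg (FImp f (FNeg g)).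
Definition FDia {AP PV} (a : prog AP) (f : form AP PV) : form AP PV :=
  FNeg (FBox a (FNeg f)).

Record kripke (AP PV : Type) := Kripke {
  kstate : Type;
  knonempty : inhabited kstate;
  krel : AP -> kstate -> kstate -> Prop;
  kval : PV -> kstate -> Prop }.

Fixpoint prel (AP PV : Type) (M : kripke AP PV) (al : prog AP) : kstate M -> kstate M -> Prop :=
  match al with
  | PAtom a => @krel AP PV M a
  | PSeq a1 a2 => fun s u => exists t, @prel AP PV M a1 s t /\ @prel AP PV M a2 t u
  | PUnion a1 a2 => fun s u => @prel AP PV M a1 s u \/ @prel AP PV M a2 s u
  | PInter a1 a2 => fun s u => @prel AP PV M a1 s u /\ @prel AP PV M a2 s u
  | PStar a1 => clos_refl_trans _ (@prel AP PV M a1)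
  end.

Fixpoint sat (AP PV : Type) (M : kripke AP PV) (s : kstate M) (f : form AP PV) : Prop :=
  match f with
  | FVar p => @kval AP PV M p s
  | FBot => False
  | FImp f1 f2 => @sat AP PV M s f1 -> @sat AP PV M s f2
  | FBox a g => forall t, @prel AP PV M a s t -> @sat AP PV M t g
  end.

Inductive mstate (m : nat) : Type :=
  | Root : mstate m
  | Tst : mstate m
  | Sst : 'I_m -> mstate m.         (* Sst i = s^m_{i+1} *)

Arguments Root {m}.
Arguments Tst {m}.

Inductive mbase (m : nat) : mstate m -> mstate m -> Prop :=
  | mb_rt : mbase Root Tst
  | mb_tt : mbase Tst Tst
  | mb_rs : forall i : 'I_m, nat_of_ord i = 0 -> mbase Root (Sst i)
  | mb_ss : forall i j : 'I_m, nat_of_ord j = (nat_of_ord i).+1 -> mbase (Sst i) (Sst j).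

Definition Mm (AP PV : Type) (b : AP) (m : nat) : kripke AP PV :=
  @Kripke AP PV (mstate m) (inhabits Root)
    (fun a s t => a = b /\ clos_trans _ (@mbase m) s t)
    (fun _ _ => False).

Fixpoint diapow {AP PV} (b : AP) (j : nat) (f : form AP PV) : form AP PV :=
  match j with
  | 0 => f
  | j'.+1 => FDia (PAtom b) (diapow b j' f)
  end.

Definition Aform {AP PV} (b : AP) (m : nat) : form AP PV :=
  FAnd (diapow b m (FBox (PAtom b) FBot))
   (FAnd (FNeg (diapow b m.+1 (FBox (PAtom b) FBot)))
         (FDia (PAtom b) (FAnd (FDia (PAtom b) FTop) (FBox (PAtom b) (FDia (PAtom b) FTop))))).

Arguments prel {AP PV} M al _ _.
Arguments sat {AP PV} M s f.

(* Main.v *)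
Require Import Defs.
From mathcomp Require Import all_boot.
From Stdlib Require Import Relations.
From Stdlib Require Import Classical Lia.
From mathcomp Require Import zify.

Definition step {k} (x y : mstate k) : Prop :=
  match x, y with
  | Root, Tst => True
  | Tst, Tst => True
  | Root, Sst _ => True
  | Sst i, Sst j => (i < j)%N
  | _, _ => False
  end.

Lemma ss_ct k : forall d (i j : 'I_k), (nat_of_ord j = i + d.+1)%N ->
  clos_trans _ (@mbase k) (Sst i) (Sst j).
Proof.
  induction d; intros i j E.
  - apply t_step, mb_ss; lia.
  - have Hlt : (i + d.+1 < k)%N by have := ltn_ord j; lia.
    apply t_trans with (Sst (Ordinal Hlt)).
    + apply IHd; simpl; lia.
    + apply t_step, mb_ss; simpl; lia.
Qed.

Lemma root_s k (j : 'I_k) : clos_trans _ (@mbase k) Root (Sst j).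
Proof.
  have H0 : (0 < k)%N by have := ltn_ord j; lia.
  destruct (nat_of_ord j) eqn:E.
  - apply t_step, mb_rs; auto.
  - apply t_trans with (Sst (Ordinal H0)).
    + apply t_step, mb_rs; reflexivity.
    + apply ss_ct with n; simpl; lia.
Qed.

Lemma ct_char k (x y : mstate k) : clos_trans _ (@mbase k) x y <-> step x y.
Proof.
  split.
  - induction 1.
    + destruct H; simpl; auto; lia.
    + destruct x, y, z; simpl in *; try tauto; lia.
  - destruct x, y; simpl; intros; try contradiction.
    + apply t_step, mb_rt.
    + apply root_s.
    + apply t_step, mb_tt.
    + apply ss_ct with (nat_of_ord o0 - o.+1)%N; lia.
Qed.

Section S.
Variables (AP PV : Type) (b : AP).

Lemma sat_dia k (x : mstate k) f :
  sat (Mm PV b k) x (FDia (PAtom b) f) <->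
  exists t, clos_trans _ (@mbase k) x t /\ sat (Mm PV b k) t f.
Proof.
  simpl. split.
  - intro H. apply NNPP. intro Hn. apply H. intros t [_ Ht] Hf. apply Hn; eauto.
  - intros [t [Ht Hf]] H. exact (H t (conj erefl Ht) Hf).
Qed.

Lemma sat_and k (x : mstate k) f g :
  sat (Mm PV b k) x (FAnd f g) <-> sat (Mm PV b k) x f /\ sat (Mm PV b k) x g.
Proof.
  simpl. split.
  - intro H. split; apply NNPP; intro Hn; apply H; intros; auto.
  - intros [H1 H2] H. exact (H H1 H2).
Qed.

Definition D {k} (x : mstate k) (j : nat) : Prop :=
  match x with
  | Root => (0 < j <= k)%N
  | Tst => False
  | Sst i => if j is 0 then i.+1 = k else (i + j < k)%N
  end.

Lemma diapow_char k (x : mstate k) j :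
  sat (Mm PV b k) x (diapow b j (FBox (PAtom b) FBot)) <-> D x j.
Proof.
  induction j in x |- *.
  - simpl. split.
    + intro H. destruct x; simpl.
      * exfalso; apply (H Tst); split; [reflexivity| apply t_step, mb_rt].
      * apply (H Tst); split; [reflexivity| apply t_step, mb_tt].
      * apply NNPP; intro Hne.
        have Hlt : (o.+1 < k)%N by have := ltn_ord o; lia.
        apply (H (Sst (Ordinal Hlt))). split; [reflexivity|].
        apply t_step, mb_ss; reflexivity.
    + intros HD t [_ Ht]. apply ct_char in Ht.
      destruct x; simpl in HD; try contradiction; try lia.
      destruct t; simpl in Ht; try contradiction.
      have := ltn_ord o0. lia.
  - cbn [diapow]. etransitivity; [apply sat_dia|]. split.
    + intros [t [Ht Hs]]. apply IHj in Hs. apply ct_char in Ht.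
      destruct x, t; simpl in *; try contradiction.
      * have := ltn_ord o. destruct j; lia.
      * destruct j; lia.
    + intro HD. destruct x; simpl in HD; try contradiction.
      * destruct j.
        -- have Hk : (k.-1 < k)%N by lia.
           exists (Sst (Ordinal Hk)). split; [apply root_s|].
           apply IHj. simpl. lia.
        -- have Hk : (0 < k)%N by lia.
           exists (Sst (Ordinal Hk)). split; [apply root_s|].
           apply IHj. simpl. lia.
      * destruct j.
        -- have Hk : (k.-1 < k)%N by lia.
           exists (Sst (Ordinal Hk)). split; [apply ct_char; simpl; lia|].
           apply IHj. simpl. lia.
        -- have Hk : (o.+1 < k)%N by lia.
           exists (Sst (Ordinal Hk)). split; [apply ct_char; simpl; lia|].
           apply IHj. simpl. lia.
Qed.

Definition Cf : form AP PV :=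
  FDia (PAtom b) (FAnd (FDia (PAtom b) FTop) (FBox (PAtom b) (FDia (PAtom b) FTop))).

Lemma C_sst k (o : 'I_k) : ~ sat (Mm PV b k) (Sst o) Cf.
Proof.
  unfold Cf. rewrite sat_dia. intros [y [Hy Hs]].
  rewrite sat_and in Hs. destruct Hs as [H1 H2].
  rewrite sat_dia in H1. destruct H1 as [z [Hz _]].
  apply ct_char in Hy. apply ct_char in Hz.
  destruct y; simpl in Hy; try contradiction.
  destruct z; simpl in Hz; try contradiction.
  have Hk : (k.-1 < k)%N by have := ltn_ord o1; lia.
  have H3 := H2 (Sst (Ordinal Hk)) (conj erefl (proj2 (ct_char _ _ _) _)).
  have H4 := H3 ltac:(simpl; have := ltn_ord o1; lia).
  apply sat_dia in H4. destruct H4 as [w [Hw _]].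
  apply ct_char in Hw. destruct w; simpl in Hw; try contradiction.
  have := ltn_ord o2. lia.
Qed.

Lemma sat_top k (x : mstate k) : sat (Mm PV b k) x FTop.
Proof. simpl; auto. Qed.

Lemma C_root k : sat (Mm PV b k) Root Cf.
Proof.
  unfold Cf. apply sat_dia. exists Tst. split; [apply t_step, mb_rt|].
  apply sat_and. split.
  - apply sat_dia. exists Tst. split; [apply t_step, mb_tt| apply sat_top].
  - intros t [_ Ht]. apply ct_char in Ht. destruct t; simpl in Ht; try contradiction.
    apply sat_dia. exists Tst. split; [apply t_step, mb_tt| apply sat_top].
Qed.

End S.

Theorem lemma2 (AP PV : Type) (b : AP) (N : nat) :
  1 <= N ->
  forall k m : nat, 1 <= k <= N -> 1 <= m <= N ->
  forall x : kstate (Mm PV b k),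
    sat (Mm PV b k) x (Aform b m) <-> (k = m /\ x = Root).
Proof.
  intros HN k m Hk Hm x. simpl in x.
  unfold Aform. rewrite !sat_and. split.
  - intros [H1 [H2 H3]].
    apply diapow_char in H1.
    have H2' : ~ D x m.+1 := fun h => H2 (proj2 (diapow_char _ _ _ _ _ _) h).
    destruct x; simpl in H1, H2'.
    + split; [lia|reflexivity].
    + contradiction.
    + exfalso. exact (@C_sst AP PV b k o H3).
  - intros [E ->]. subst m. split; [|split].
    + apply diapow_char. simpl. lia.
    + intro h. apply diapow_char in h. simpl in h. lia.
    + apply C_root.
Qed.
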